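(* Let $p$ be a positive integer, let $q,s$ be positive integers with $4q=9s$, let $r_1,\dots,r_p$ be positive integers with $\gcd(r_i,2q)=1$, and let $t$ be a positive integer with $\gcd(t,3s)=1$. Let $\Omega=\{(U,V)\in\mathbb R^2:a<UV<b\}$ with $-\infty\le a<0<b\le\infty$ and $S^{4p+5}=\{(z,w,x)\in\mathbb C^p\times\mathbb C^p\times\mathbb C^3:|z|^2+|w|^2+|x|^2=1\}$. Define $K_2:\Omega\times S^{4p+5}\to\Omega\times S^{4p+5}$ by $K_2(U,V,z,w,x_1,x_2,x_3)=(V,U,w,\zeta z,x_2,x_3,\omega x_1)$, where $(\zeta z)_j=e^{i\pi r_j/q}z_j$ and $\omega=e^{2\pi i t/(3s)}$. Then $K_2$ generates a cyclic group of order $4q=9s$ acting freely and properly discontinuously on $\Omega\times S^{4p+5}$; moreover $K_2^2$ acts trivially on $\Omega$ and generates a cyclic group of order $2q$ acting freely on $S^{4p+5}$. In particular the smallest admissible $q$ is $9$.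
   Context: In Myers–Perry angle coordinates ($z_j=\mu_je^{i\theta_j}$, $w_j=\nu_je^{i\varphi_j}$, $x_k=\rho_ke^{i\psi_k}$), $K_2$ maps $(U,V,\mu,\nu,\rho_1,\rho_2,\rho_3,\theta,\varphi,\psi_1,\psi_2,\psi_3)$ to $(V,U,\nu,\mu,\rho_2,\rho_3,\rho_1,\varphi,\theta+(\pi/q)r,\psi_2,\psi_3,\psi_1+2\pi t/(3s))$. In the paper this models the $D=4p+7$ Myers–Perry(-AdS) black hole with angular momentum in $\theta_i$ equal to minus that in $\varphi_i$ and vanishing angular momenta in the $\psi_k$, for which $K_2$ is an isometry and the quotient is a rotating geon. *)

(* Defs.v *)
From mathcomp Require Import all_boot.
From Stdlib Require Import Reals.
From Coquelicot Require Import Rbar.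

Set Implicit Arguments.
Unset Strict Implicit.
Local Open Scope R_scope.

(* Complex numbers as pairs (Re, Im). *)
Definition C := (R * R)%type.
Definition Cmul (u v : C) : C :=
  ((u.1 * v.1 - u.2 * v.2), (u.1 * v.2 + u.2 * v.1)).
Definition Csub (u v : C) : C := ((u.1 - v.1), (u.2 - v.2)).
Definition Cnorm2 (u : C) : R := (u.1 * u.1 + u.2 * u.2).
Definition cis (theta : R) : C := (cos theta, sin theta).

Record sph (p : nat) := Sph {
  sz : 'I_p -> C; sw : 'I_p -> C; sx1 : C; sx2 : C; sx3 : C }.

Definition sqnorm (p : nat) (S : sph p) : R :=
  ((\big[Rplus/0]_(j < p) Cnorm2 (sz S j)) + (\big[Rplus/0]_(j < p) Cnorm2 (sw S j))
   + Cnorm2 (sx1 S) + Cnorm2 (sx2 S) + Cnorm2 (sx3 S)).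

Definition inSphere (p : nat) (S : sph p) : Prop := sqnorm S = 1%R.

Definition sph_dist2 (p : nat) (S T : sph p) : R :=
  sqnorm (Sph (fun j => Csub (sz S j) (sz T j)) (fun j => Csub (sw S j) (sw T j))
              (Csub (sx1 S) (sx1 T)) (Csub (sx2 S) (sx2 T)) (Csub (sx3 S) (sx3 T))).

Definition pt (p : nat) := ((R * R) * sph p)%type.

Definition pt_dist2 (p : nat) (P Q : pt p) : R :=
  ((P.1.1 - Q.1.1) ^ 2 + (P.1.2 - Q.1.2) ^ 2 + sph_dist2 P.2 Q.2).

Definition inOmega (a b : Rbar) (UV : R * R) : Prop :=
  Rbar_lt a (Finite (UV.1 * UV.2)) /\ Rbar_lt (Finite (UV.1 * UV.2)) b.

Definition inM (p : nat) (a b : Rbar) (P : pt p) : Prop :=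
  inOmega a b P.1 /\ inSphere P.2.

Definition K2 (p q s : nat) (r : 'I_p -> nat) (t : nat) (P : pt p) : pt p :=
  let U := P.1.1 in let V := P.1.2 in let S := P.2 in
  ((V, U),
   Sph (sw S)
       (fun j => Cmul (cis (PI * INR (r j) / INR q)) (sz S j))
       (sx2 S) (sx3 S)
       (Cmul (cis (2 * PI * INR t / INR (3 * s)%nat)) (sx1 S))).

Definition generates_cyclic_of_order (T : Type) (M : T -> Prop) (f : T -> T)
    (n : nat) : Prop :=
  (0 < n)%nat /\
  (forall x, M x -> M (f x)) /\
  (forall x, M x -> iter n f x = x) /\
  (forall k, (0 < k < n)%nat -> exists x, M x /\ iter k f x <> x).

Definition acts_freely (T : Type) (M : T -> Prop) (f : T -> T) : Prop :=
  forall k x, M x -> iter k f x = x -> forall y, M y -> iter k f y = y.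

(* The group generated by f acts properly discontinuously on M (with the
   topology induced by the distance d): every point of M has a neighbourhood
   B (a d-ball intersected with M) with g B ∩ B = ∅ for every non-identity
   element g of the group. *)
Definition acts_properly_discontinuously (T : Type) (M : T -> Prop)
    (d2 : T -> T -> R) (f : T -> T) : Prop :=
  forall x, M x -> exists eps : R, (0 < eps) /\
    forall k, (exists y, M y /\ iter k f y <> y) ->
      forall y, M y -> (d2 x y < eps) -> ~ (d2 x (iter k f y) < eps).

(* Main.v *)
Require Import Defs.
From Stdlib Require Import Reals Lra Lia ZArith Psatz FunctionalExtensionality.
From HB Require Import structures.
From mathcomp Require Import all_boot.
From Coquelicot Require Import Rbar.
From mathcomp Require Import zify.
From Stdlib Require Import Lra Psatz.
Local Open Scope R_scope.

Lemma cos1 x : cos x = 1 -> exists k : Z, x = 2 * IZR k * PI.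
Proof.
move=> H. have := cos_2a_sin (x/2). replace (2 * (x/2)) with x by field.
rewrite H => H2. have Hs : sin (x/2) = 0 by nra.
case: (sin_eq_0_0 _ Hs) => k Hk. exists k. lra.
Qed.

Lemma INR_muln m n : INR (m * n)%nat = INR m * INR n.
Proof. exact: mult_INR. Qed.

Lemma cosdiv (N D : nat) : (0 < D)%nat -> cos (2 * PI * INR N / INR D) = 1 -> (D %| N)%nat.
Proof.
move=> HD /cos1 [k Hk].
have HD' : INR D <> 0 by apply: not_0_INR; lia.
have E : INR N = IZR k * INR D.
  have HP := PI_RGT_0.
  apply: (Rmult_eq_reg_l (2 * PI)); last lra.
  rewrite -[LHS](Rmult_1_r) -(Rinv_r (INR D)) // .
  transitivity (2 * PI * INR N / INR D * INR D); first by field.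
  rewrite Hk. ring.
rewrite !INR_IZR_INZ -mult_IZR in E. apply eq_IZR in E.
apply/dvdnP. exists (Z.to_nat k). lia.
Qed.


Lemma cis_mul a b u : Cmul (cis a) (Cmul (cis b) u) = Cmul (cis (a+b)) u.
Proof. case: u => x y; rewrite /Cmul /cis /= cos_plus sin_plus; f_equal; ring. Qed.

Lemma Cnorm2_cis a u : Cnorm2 (Cmul (cis a) u) = Cnorm2 u.
Proof. case: u => x y; rewrite /Cnorm2 /Cmul /cis /=.
have := sin2_cos2 a; rewrite /Rsqr => H. nra. Qed.

Lemma Csub_cis c u v : Csub (Cmul c u) (Cmul c v) = Cmul c (Csub u v).
Proof. case: u v c => [? ?] [? ?] [? ?]; rewrite /Csub /Cmul /=; f_equal; ring. Qed.

Lemma cis_period n u : Cmul (cis (2 * INR n * PI)) u = u.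
Proof.
have Hc := cos_period 0 n. have Hs := sin_period 0 n.
rewrite Rplus_0_l cos_0 sin_0 in Hc Hs.
case: u => x y; rewrite /Cmul /cis /= Hc Hs; f_equal; ring. Qed.

Lemma cis_0 u : Cmul (cis 0) u = u.
Proof. case: u => x y; rewrite /Cmul /cis /= cos_0 sin_0; f_equal; ring. Qed.

Lemma fixC th u : u = Cmul (cis th) u -> Cnorm2 u <> 0 -> cos th = 1.
Proof.
case: u => a b; rewrite /Cmul /cis /Cnorm2 /= => [[E1 E2]] Hn.
have H : (1 - cos th) * (a*a+b*b) = a * (a - (cos th*a - sin th*b)) + b * (b - (cos th*b + sin th*a)) by ring.
rewrite -E1 -E2 !Rminus_diag !Rmult_0_r Rplus_0_r in H.
case: (Rmult_integral _ _ H) => //; lra.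
Qed.

Lemma Cnorm2_ge0 u : 0 <= Cnorm2 u.
Proof. rewrite /Cnorm2; nra. Qed.

Lemma Cnorm2_eq0 u : Cnorm2 u = 0 -> u = (0,0).
Proof. case: u => a b; rewrite /Cnorm2 /= => H. f_equal; nra. Qed.

Set Implicit Arguments.
Unset Strict Implicit.

Definition hg (p q : nat) (r : 'I_p -> nat) (zw : ('I_p -> Defs.C) * ('I_p -> Defs.C)) :=
  (zw.2, fun j => Cmul (cis (PI * INR (r j) / INR q)) (zw.1 j)).
Definition hx (s t : nat) (x : Defs.C * Defs.C * Defs.C) :=
  (x.1.2, x.2, Cmul (cis (2 * PI * INR t / INR (3 * s)%nat)) x.1.1).
Definition swp (x : R * R) := (x.2, x.1).
Definition zwp p (P : pt p) := (sz P.2, sw P.2).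
Definition xp p (P : pt p) := (sx1 P.2, sx2 P.2, sx3 P.2).

Lemma zwp_iter p q s r t n (P : pt p) :
  zwp (iter n (K2 q s r t) P) = iter n (hg q r) (zwp P).
Proof. elim: n => //= n IH. by rewrite -IH. Qed.

Lemma xp_iter p q s r t n (P : pt p) :
  xp (iter n (K2 q s r t) P) = iter n (hx s t) (xp P).
Proof. elim: n => //= n IH. by rewrite -IH. Qed.

Lemma uv_iter p q s r t n (P : pt p) :
  (iter n (K2 q s r t) P).1 = iter n swp P.1.
Proof. elim: n => //= n IH. by rewrite -IH. Qed.

Lemma swp2 m x : iter m.*2 swp x = x.
Proof. elim: m => // m IH; rewrite doubleS /= IH; by case: x IH. Qed.

Lemma pt_ext p (P Q : pt p) : P.1 = Q.1 -> zwp P = zwp Q -> xp P = xp Q -> P = Q.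
Proof.
case: P => [uv [z w a b c]]; case: Q => [uv' [z' w' a' b' c']].
rewrite /zwp /xp /= => -> [-> ->] [-> -> ->] //.
Qed.

Lemma iter_hg2 p q (r : 'I_p -> nat) m zw j :
  (iter m.*2 (hg q r) zw).1 j = Cmul (cis (INR m * (PI * INR (r j) / INR q))) (zw.1 j) /\
  (iter m.*2 (hg q r) zw).2 j = Cmul (cis (INR m * (PI * INR (r j) / INR q))) (zw.2 j).
Proof.
elim: m => [|m [IH1 IH2]]; first by rewrite /= Rmult_0_l !cis_0.
rewrite doubleS S_INR /= IH1 IH2 !cis_mul.
split; congr Cmul; congr (cis _); ring.
Qed.

Lemma iter_hx3 s t l x :
  iter (3 * l) (hx s t) x =
  (Cmul (cis (INR l * (2 * PI * INR t / INR (3 * s)%nat))) x.1.1,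
   Cmul (cis (INR l * (2 * PI * INR t / INR (3 * s)%nat))) x.1.2,
   Cmul (cis (INR l * (2 * PI * INR t / INR (3 * s)%nat))) x.2).
Proof.
elim: l => [|l IH].
  by rewrite /= Rmult_0_l !cis_0; case: x => [[? ?] ?].
rewrite mulnS iterD IH S_INR.
rewrite /hx; cbn [iter fst snd]. rewrite !cis_mul.
congr (_,_,_); congr Cmul; congr (cis _); ring.
Qed.


Lemma INRpos n : (0 < n)%N -> INR n <> 0.
Proof. move=> H; apply: not_0_INR; lia. Qed.

Lemma period p q s (r : 'I_p -> nat) t (P : pt p) :
  (0 < q)%N -> (0 < s)%N -> (4 * q = 9 * s)%N ->
  iter (4 * q) (K2 q s r t) P = P.
Proof.
move=> Hq Hs Hqs.
apply: pt_ext.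
- rewrite uv_iter. have -> : (4 * q = (2 * q).*2)%N by rewrite -mul2n; lia.
  exact: swp2.
- rewrite zwp_iter. have -> : (4 * q = (2 * q).*2)%N by rewrite -mul2n; lia.
  have E : forall j, INR (2 * q) * (PI * INR (r j) / INR q) = 2 * INR (r j) * PI.
    move=> j; rewrite INR_muln; have := INRpos Hq; simpl (INR 2) => ?; field; auto.
  rewrite [LHS]surjective_pairing [RHS]surjective_pairing; f_equal;
  apply: functional_extensionality => j.
  + by rewrite (iter_hg2 _ _ _ _ j).1 E cis_period.
  + by rewrite (iter_hg2 _ _ _ _ j).2 E cis_period.
- rewrite xp_iter. have -> : (4 * q = 3 * (3 * s))%N by lia.
  rewrite iter_hx3.
  have -> : INR (3 * s) * (2 * PI * INR t / INR (3 * s)) = 2 * INR t * PI.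
    have := INRpos (_ : (0 < 3 * s)%N); move=> /(_ ltac:(lia)) ?; field; auto.
  rewrite !cis_period. by case: (xp P) => [[? ?] ?].
Qed.

Lemma zw_aux q k rj (u : Defs.C) :
  (0 < q)%N -> (0 < k < 4 * q)%N -> gcdn rj (2 * q) = 1%N ->
  u = Cmul (cis (INR k * (PI * INR rj / INR q))) u ->
  (k = q.*2 -> u = Cmul (cis (INR q * (PI * INR rj / INR q))) u) ->
  Cnorm2 u = 0.
Proof.
move=> Hq Hk Hg H1 H2.
case: (Req_dec (Cnorm2 u) 0) => // Hn; exfalso.
have Hq' := INRpos Hq.
have C1 := fixC _ _ H1 Hn.
have D1 : (2 * q %| rj * k)%N.
  apply: cosdiv; first lia.
  rewrite -C1 INR_muln INR_muln; congr cos; simpl (INR 2); field; auto.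
have D2 : (2 * q %| k)%N.
  by rewrite -(Gauss_dvdr k (_ : coprime (2 * q) rj)) // /coprime gcdnC Hg.
have Ek : k = q.*2.
  case/dvdnP: D2 => c Hc. rewrite -mul2n; move: Hk; rewrite Hc; case: c {Hc} => [|[|c]] Hk; clear -Hq Hk; nia.
have C2 := fixC _ _ (H2 Ek) Hn.
have D3 : (2 %| rj)%N.
  apply: cosdiv => //. rewrite -C2; congr cos; simpl (INR 2); field; auto.
have : (2 %| gcdn rj (2 * q))%N by rewrite dvdn_gcd D3 dvdn_mulr.
by rewrite Hg.
Qed.

Lemma x_aux s k t (u : Defs.C) :
  (0 < s)%N -> (0 < k < 9 * s)%N -> gcdn t (3 * s) = 1%N ->
  u = Cmul (cis (INR k * (2 * PI * INR t / INR (3 * s)%nat))) u ->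
  (forall c, k = (3 * (s * c))%N ->
     u = Cmul (cis (INR (s * c) * (2 * PI * INR t / INR (3 * s)%nat))) u) ->
  Cnorm2 u = 0.
Proof.
move=> Hs Hk Hg H1 H2.
case: (Req_dec (Cnorm2 u) 0) => // Hn; exfalso.
have H3s : (0 < 3 * s)%N by lia.
have Hs' := INRpos H3s.
have C1 := fixC _ _ H1 Hn.
have D1 : (3 * s %| t * k)%N.
  apply: cosdiv => //. rewrite -C1 INR_muln; congr cos; field; auto.
have D2 : (3 * s %| k)%N.
  by rewrite -(Gauss_dvdr k (_ : coprime (3 * s) t)) // /coprime gcdnC Hg.
case/dvdnP: D2 => c Hc.
have Ek : k = (3 * (s * c))%N by lia.
have C2 := fixC _ _ (H2 c Ek) Hn.
have D3 : (3 * s %| t * (s * c))%N.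
  apply: cosdiv => //. rewrite -C2 INR_muln; congr cos; field; auto.
have D4 : (3 %| t * c)%N.
  move: D3. have -> : (t * (s * c) = s * (t * c))%N by lia.
  by rewrite mulnC dvdn_pmul2l.
have cop : coprime 3 t.
  rewrite coprime_sym. apply: (coprime_dvdr (_ : 3 %| 3 * s)%N); first exact: dvdn_mulr.
  by rewrite /coprime Hg.
rewrite (Gauss_dvdr c cop) in D4.
case/dvdnP: D4 => d Hd. rewrite Hd in Hc; clear -Hc Hk Hs; subst k; case: d Hk => [|d] Hk; nia.
Qed.

Lemma big0R p (F : 'I_p -> R) : (forall j, F j = 0) -> \big[Rplus/0]_(j < p) F j = 0.
Proof. move=> H; apply: (big_ind (fun x => x = 0)) => // x y -> ->; ring. Qed.

Lemma no_fix p q s (r : 'I_p -> nat) t (P : pt p) k :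
  (0 < q)%N -> (0 < s)%N -> (4 * q = 9 * s)%N ->
  (forall j, (0 < r j)%N /\ gcdn (r j) (2 * q) = 1%N) ->
  gcdn t (3 * s) = 1%N ->
  inSphere P.2 -> (0 < k < 4 * q)%N -> iter k (K2 q s r t) P = P -> False.
Proof.
move=> Hq Hs Hqs Hr Ht HS Hk Hfix.
have hzw : iter k (hg q r) (zwp P) = zwp P by rewrite -(zwp_iter q s r t) Hfix.
have hzw2 : iter k.*2 (hg q r) (zwp P) = zwp P by rewrite -addnn iterD !hzw.
have hzwq : k = q.*2 -> iter q.*2 (hg q r) (zwp P) = zwp P by move=> <-.
have Z1 : forall j, Cnorm2 (sz P.2 j) = 0.
  move=> j; apply: (zw_aux Hq Hk (Hr j).2).
  - have := (iter_hg2 q r k (zwp P) j).1; rewrite hzw2; exact.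
  - move=> /hzwq E; have := (iter_hg2 q r q (zwp P) j).1; rewrite E; exact.
have Z2 : forall j, Cnorm2 (sw P.2 j) = 0.
  move=> j; apply: (zw_aux Hq Hk (Hr j).2).
  - have := (iter_hg2 q r k (zwp P) j).2; rewrite hzw2; exact.
  - move=> /hzwq E; have := (iter_hg2 q r q (zwp P) j).2; rewrite E; exact.
have hx1 : iter k (hx s t) (xp P) = xp P by rewrite -(xp_iter q s r t) Hfix.
have hx3 : iter (3 * k) (hx s t) (xp P) = xp P.
  rewrite (_ : (3 * k = k + (k + k))%N); last by lia.
  by rewrite !iterD !hx1.
have Hk' : (0 < k < 9 * s)%N by lia.
have E3 := iter_hx3 s t k (xp P). rewrite hx3 /xp in E3. case: E3 => e1 e2 e3.
have hc : forall c, k = (3 * (s * c))%N -> xp P = iter (3 * (s * c)) (hx s t) (xp P).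
  by move=> c <-.
have X1 : Cnorm2 (sx1 P.2) = 0.
  apply: (x_aux Hs Hk' Ht).
  - exact: e1.
  - move=> c /hc; rewrite iter_hx3 /xp => -[f _ _]; exact: f.
have X2 : Cnorm2 (sx2 P.2) = 0.
  apply: (x_aux Hs Hk' Ht).
  - exact: e2.
  - move=> c /hc; rewrite iter_hx3 /xp => -[_ f _]; exact: f.
have X3 : Cnorm2 (sx3 P.2) = 0.
  apply: (x_aux Hs Hk' Ht).
  - exact: e3.
  - move=> c /hc; rewrite iter_hx3 /xp => -[_ _ f]; exact: f.
move: HS; rewrite /inSphere /sqnorm (big0R Z1) (big0R Z2) X1 X2 X3. lra.
Qed.


Lemma Rplus_assoc' : associative Rplus. Proof. move=> *; by rewrite Rplus_assoc. Qed.
HB.instance Definition _ := Monoid.isComLaw.Build R 0 Rplus Rplus_assoc' Rplus_comm Rplus_0_l.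

Lemma big_ge0 p (F : 'I_p -> R) : (forall j, 0 <= F j) -> 0 <= \big[Rplus/0]_(j < p) F j.
Proof. move=> H; apply: (big_ind (fun x => 0 <= x)) => [|x y hx hy|i _]; [lra | lra | exact: H]. Qed.

Lemma big_le3 p (F G H : 'I_p -> R) : (forall j, F j <= 2 * G j + 2 * H j) ->
  \big[Rplus/0]_(j < p) F j <= 2 * \big[Rplus/0]_(j < p) G j + 2 * \big[Rplus/0]_(j < p) H j.
Proof.
move=> Hj.
apply: (big_ind3 (fun x y z => x <= 2 * y + 2 * z)) => [|*|i _]; [lra | lra | exact: Hj].
Qed.

Lemma big_eq0 p (F : 'I_p -> R) : (forall j, 0 <= F j) -> \big[Rplus/0]_(j < p) F j = 0 ->
  forall j, F j = 0.
Proof.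
move=> H0 H j. move: H; rewrite (bigD1 j) //=.
have : 0 <= \big[Rplus/0]_(i < p | i != j) F i.
  apply: (big_ind (fun x => 0 <= x)) => [|x y hx hy|i _]; [lra | lra | exact: H0].
have := H0 j. set X := \big[Rplus/0]_(i < p | i != j) F i. move=> h1 h2 h3. nra.
Qed.

Lemma sqnorm_ge0 p (S : sph p) : 0 <= sqnorm S.
Proof.
rewrite /sqnorm. have := big_ge0 (fun j => Cnorm2_ge0 (sz S j)).
have := big_ge0 (fun j => Cnorm2_ge0 (sw S j)).
have := Cnorm2_ge0 (sx1 S). have := Cnorm2_ge0 (sx2 S). have := Cnorm2_ge0 (sx3 S). lra.
Qed.

Lemma Cnorm2_sub_sym u v : Cnorm2 (Csub u v) = Cnorm2 (Csub v u).
Proof. rewrite /Cnorm2 /Csub /=; ring. Qed.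

Lemma Cnorm2_tri u v w : Cnorm2 (Csub u w) <= 2 * Cnorm2 (Csub u v) + 2 * Cnorm2 (Csub v w).
Proof. case: u v w => [a b] [c d] [e f]; rewrite /Cnorm2 /Csub /=.
have := Rle_0_sqr (a - 2*c + e); have := Rle_0_sqr (b - 2*d + f); rewrite /Rsqr => *; nra. Qed.

Lemma Csub_eq0 u v : Cnorm2 (Csub u v) = 0 -> u = v.
Proof. case: u v => [a b] [c d] /Cnorm2_eq0; rewrite /Csub /= => -[? ?]. f_equal; lra. Qed.

Lemma d2_sym p (P Q : pt p) : pt_dist2 P Q = pt_dist2 Q P.
Proof.
rewrite /pt_dist2 /sph_dist2 /sqnorm /=.
rewrite (eq_bigr _ (fun j _ => Cnorm2_sub_sym (sz P.2 j) (sz Q.2 j))).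
rewrite (eq_bigr _ (fun j _ => Cnorm2_sub_sym (sw P.2 j) (sw Q.2 j))).
rewrite (Cnorm2_sub_sym (sx1 P.2)) (Cnorm2_sub_sym (sx2 P.2)) (Cnorm2_sub_sym (sx3 P.2)).
ring.
Qed.

Lemma d2_ge0 p (P Q : pt p) : 0 <= pt_dist2 P Q.
Proof. rewrite /pt_dist2 /sph_dist2. have := sqnorm_ge0 (Sph (fun j => Csub (sz P.2 j) (sz Q.2 j))
   (fun j => Csub (sw P.2 j) (sw Q.2 j)) (Csub (sx1 P.2) (sx1 Q.2)) (Csub (sx2 P.2) (sx2 Q.2))
   (Csub (sx3 P.2) (sx3 Q.2))). move=> h.
have := pow2_ge_0 (P.1.1 - Q.1.1). have := pow2_ge_0 (P.1.2 - Q.1.2). move: h. set X := sqnorm _. move=> *; lra. Qed.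

Lemma sum7 a1 a2 a3 a4 a5 a6 a7 b1 b2 b3 b4 b5 b6 b7 c1 c2 c3 c4 c5 c6 c7 :
  a1 <= 2 * b1 + 2 * c1 -> a2 <= 2 * b2 + 2 * c2 -> a3 <= 2 * b3 + 2 * c3 ->
  a4 <= 2 * b4 + 2 * c4 -> a5 <= 2 * b5 + 2 * c5 -> a6 <= 2 * b6 + 2 * c6 ->
  a7 <= 2 * b7 + 2 * c7 ->
  a1 + a2 + ((((a3 + a4) + a5) + a6) + a7) <=
  2 * (b1 + b2 + ((((b3 + b4) + b5) + b6) + b7)) +
  2 * (c1 + c2 + ((((c3 + c4) + c5) + c6) + c7)).
Proof. move=> *; lra. Qed.

Lemma sq_tri x y z : (x - z) ^ 2 <= 2 * (x - y) ^ 2 + 2 * (y - z) ^ 2.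
Proof. have := Rle_0_sqr (x - 2*y + z); rewrite /Rsqr => *; nra. Qed.

Lemma d2_tri p (P Q T : pt p) : pt_dist2 P T <= 2 * pt_dist2 P Q + 2 * pt_dist2 Q T.
Proof.
rewrite /pt_dist2 /sph_dist2 /sqnorm /=.
apply: sum7; first exact: sq_tri; first exact: sq_tri.
- exact: (big_le3 (fun j => Cnorm2_tri (sz P.2 j) (sz Q.2 j) (sz T.2 j))).
- exact: (big_le3 (fun j => Cnorm2_tri (sw P.2 j) (sw Q.2 j) (sw T.2 j))).
- exact: Cnorm2_tri.
- exact: Cnorm2_tri.
- exact: Cnorm2_tri.
Qed.

Lemma zero7 a1 a2 a3 a4 a5 a6 a7 :
  0 <= a1 -> 0 <= a2 -> 0 <= a3 -> 0 <= a4 -> 0 <= a5 -> 0 <= a6 -> 0 <= a7 ->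
  a1 + a2 + ((((a3 + a4) + a5) + a6) + a7) = 0 ->
  [/\ a1 = 0, a2 = 0, a3 = 0, a4 = 0 & [/\ a5 = 0, a6 = 0 & a7 = 0]].
Proof. move=> *; split; try split; lra. Qed.

Lemma pow2_eq0 x y : (x - y) ^ 2 = 0 -> x = y.
Proof. move=> H; nra. Qed.

Lemma d2_eq0 p (P Q : pt p) : pt_dist2 P Q = 0 -> P = Q.
Proof.
case: P => [[U V] [z w a b c]]; case: Q => [[U' V'] [z' w' a' b' c']].
rewrite /pt_dist2 /sph_dist2 /sqnorm /= => H.
case: (zero7 (pow2_ge_0 _) (pow2_ge_0 _) (big_ge0 (fun j => Cnorm2_ge0 _))
   (big_ge0 (fun j => Cnorm2_ge0 _)) (Cnorm2_ge0 _) (Cnorm2_ge0 _) (Cnorm2_ge0 _) H)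
  => /pow2_eq0 -> /pow2_eq0 -> e1 e2 [/Csub_eq0 -> /Csub_eq0 -> /Csub_eq0 ->].
have -> : z = z'.
  apply: functional_extensionality => j; apply: Csub_eq0.
  exact: (big_eq0 (fun j => Cnorm2_ge0 _) e1).
have -> : w = w'.
  apply: functional_extensionality => j; apply: Csub_eq0.
  exact: (big_eq0 (fun j => Cnorm2_ge0 _) e2).
by [].
Qed.


Lemma K2_sph p q s r t (P : pt p) : sqnorm (K2 q s r t P).2 = sqnorm P.2.
Proof.
rewrite /sqnorm /=.
rewrite (eq_bigr _ (fun j _ => Cnorm2_cis _ (sz P.2 j))) Cnorm2_cis. ring.
Qed.

Lemma K2_d2 p q s r t (P Q : pt p) :
  pt_dist2 (K2 q s r t P) (K2 q s r t Q) = pt_dist2 P Q.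
Proof.
rewrite /pt_dist2 /sph_dist2 /sqnorm /=.
rewrite (eq_bigr _ (fun j _ => f_equal Cnorm2 (Csub_cis _ (sz P.2 j) (sz Q.2 j)))).
rewrite (eq_bigr _ (fun j _ => Cnorm2_cis _ (Csub (sz P.2 j) (sz Q.2 j)))).
rewrite Csub_cis Cnorm2_cis. ring.
Qed.

Lemma iter_d2 p q s r t n (P Q : pt p) :
  pt_dist2 (iter n (K2 q s r t) P) (iter n (K2 q s r t) Q) = pt_dist2 P Q.
Proof. elim: n => //= n IH; by rewrite K2_d2. Qed.

Lemma K2_M p q s r t a b (P : pt p) : inM a b P -> inM a b (K2 q s r t P).
Proof.
case=> [[H1 H2] H3]; split; last by rewrite /inSphere K2_sph.
by rewrite /inOmega /= Rmult_comm.
Qed.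

Lemma iter_M p q s r t a b n (P : pt p) : inM a b P -> inM a b (iter n (K2 q s r t) P).
Proof. move=> H; elim: n => //= n IH; exact: K2_M. Qed.

Lemma period_mul p q s (r : 'I_p -> nat) t (P : pt p) m :
  (0 < q)%N -> (0 < s)%N -> (4 * q = 9 * s)%N ->
  iter (m * (4 * q)) (K2 q s r t) P = P.
Proof.
move=> Hq Hs Hqs; elim: m => // m IH.
by rewrite mulSn iterD IH period.
Qed.

Lemma iter_mod p q s (r : 'I_p -> nat) t (P : pt p) k :
  (0 < q)%N -> (0 < s)%N -> (4 * q = 9 * s)%N ->
  iter k (K2 q s r t) P = iter (k %% (4 * q)) (K2 q s r t) P.
Proof.
move=> Hq Hs Hqs. by rewrite {1}(divn_eq k (4 * q)) iterD period_mul.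
Qed.

Lemma eps_lemma (d : nat -> R) N : (forall k, (0 < k < N)%N -> 0 < d k) ->
  exists eps, 0 < eps /\ forall k, (0 < k < N)%N -> eps <= d k.
Proof.
elim: N => [|N IH] H.
  exists 1; split; [lra | move=> k; lia].
case: IH => [k Hk|eps [He Hk]]; first by apply: H; lia.
case: (posnP N) => [HN|HN].
  exists eps; split => // k Hk'; apply: Hk; lia.
have HdN : 0 < d N by apply: H; lia.
exists (Rmin eps (d N)); split; first by apply: Rmin_pos.
move=> k Hk'. case: (ltnP k N) => HkN.
- have := Hk k (ltac:(lia)); have := Rmin_l eps (d N); lra.
- have -> : k = N by lia. exact: Rmin_r.
Qed.


Definition S0 p : sph p := Sph (fun _ => (0,0)) (fun _ => (0,0)) (1,0) (0,0) (0,0).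

Lemma S0_sph p : inSphere (S0 p).
Proof.
rewrite /inSphere /sqnorm /= !big0R.
- rewrite /Cnorm2 /=; ring.
- by move=> j; rewrite /Cnorm2 /=; ring.
Qed.

Lemma O0 a b : Rbar_lt a (Finite 0) -> Rbar_lt (Finite 0) b -> inOmega a b (0, 0).
Proof. by rewrite /inOmega /= Rmult_0_l. Qed.

Lemma iter_sph p q s r t n (P : pt p) : sqnorm (iter n (K2 q s r t) P).2 = sqnorm P.2.
Proof. elim: n => //= n IH; by rewrite K2_sph. Qed.

Lemma K2_free p q s (r : 'I_p -> nat) t a b k (x y : pt p) :
  (0 < q)%N -> (0 < s)%N -> (4 * q = 9 * s)%N ->
  (forall j, (0 < r j)%N /\ gcdn (r j) (2 * q) = 1%N) ->
  gcdn t (3 * s) = 1%N ->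
  inM a b x -> iter k (K2 q s r t) x = x -> iter k (K2 q s r t) y = y.
Proof.
move=> Hq Hs Hqs Hr Ht Mx Hfix.
have Hm : (k %% (4 * q) = 0)%N.
  case: (posnP (k %% (4 * q))) => // Hpos; exfalso.
  apply: (no_fix (P := x) (k := k %% (4 * q)) Hq Hs Hqs Hr Ht Mx.2).
  - by rewrite Hpos ltn_pmod //; lia.
  - by rewrite -iter_mod.
by rewrite iter_mod // Hm.
Qed.

Lemma sig2 p q s (r : 'I_p -> nat) t (UV : R * R) (S : sph p) :
  iter 2 (K2 q s r t) (UV, S) = (UV, (iter 2 (K2 q s r t) ((0, 0), S)).2).
Proof. by case: UV. Qed.

Lemma sig2m p q s (r : 'I_p -> nat) t m (UV : R * R) (S : sph p) :
  iter m.*2 (K2 q s r t) (UV, S) =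
  (UV, iter m (fun S => (iter 2 (K2 q s r t) ((0, 0), S)).2) S).
Proof.
elim: m => // m IH. rewrite doubleS.
change (iter (m.*2).+2 (K2 q s r t) (UV, S)) with (iter 2 (K2 q s r t) (iter m.*2 (K2 q s r t) (UV, S))).
by rewrite IH sig2.
Qed.

Theorem mainTheorem6 :
  (forall (p q s : nat) (r : 'I_p -> nat) (t : nat) (a b : Rbar),
     (0 < p)%nat -> (0 < q)%nat -> (0 < s)%nat -> (4 * q = 9 * s)%nat ->
     (forall j, (0 < r j)%nat /\ gcdn (r j) (2 * q) = 1%nat) ->
     (0 < t)%nat -> gcdn t (3 * s) = 1%nat ->
     Rbar_lt a (Finite 0) -> Rbar_lt (Finite 0) b ->
     generates_cyclic_of_order (inM a b) (K2 q s r t) (4 * q) /\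
     acts_freely (inM a b) (K2 q s r t) /\
     acts_properly_discontinuously (inM a b) (@pt_dist2 p) (K2 q s r t) /\
     exists sigma : sph p -> sph p,
       (forall (UV : R * R) (S : sph p), inOmega a b UV -> inSphere S ->
          iter 2 (K2 q s r t) (UV, S) = (UV, sigma S)) /\
       generates_cyclic_of_order (@inSphere p) sigma (2 * q) /\
       acts_freely (@inSphere p) sigma)
  /\
  ((exists s : nat, (0 < s)%nat /\ (4 * 9 = 9 * s)%nat) /\
   forall q s : nat, (0 < q)%nat -> (0 < s)%nat -> (4 * q = 9 * s)%nat -> (9 <= q)%nat).
Proof.
split; last first.
  split; first by exists 4%N.
  move=> q s Hq Hs Hqs; lia.
move=> p q s r t a b Hp Hq Hs Hqs Hr Ht0 Ht Ha Hb.
have M0 : inM a b ((0, 0), S0 p) by split; [exact: O0 | exact: S0_sph].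
split.
  split; first lia.
  split; first by move=> x; exact: K2_M.
  split; first by move=> x _; exact: period.
  move=> k Hk; exists ((0, 0), S0 p); split => // Hf.
  exact: (no_fix Hq Hs Hqs Hr Ht M0.2 Hk Hf).
split.
  move=> k x Mx Hfix y _; exact: (@K2_free p q s r t a b k x y Hq Hs Hqs Hr Ht Mx Hfix).
split.
  move=> x Mx.
  have [eps [He Hd]] : exists eps, 0 < eps /\ forall k, (0 < k < 4 * q)%N ->
      eps <= pt_dist2 x (iter k (K2 q s r t) x).
    apply: eps_lemma => k Hk.
    have := d2_ge0 x (iter k (K2 q s r t) x).
    case/Rle_lt_or_eq_dec => // /esym /d2_eq0 E.
    exfalso; exact: (no_fix Hq Hs Hqs Hr Ht Mx.2 Hk (esym E)).
  exists (eps / 4); split; first lra.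
  move=> k [y' [My' Hy']] y My Hxy Hxk.
  set k' := (k %% (4 * q))%N.
  have Hk' : (0 < k' < 4 * q)%N.
    case: (posnP k') => Hpos.
      by exfalso; apply: Hy'; rewrite iter_mod // -/k' Hpos.
    by rewrite /k' ltn_pmod //; lia.
  have := d2_tri x (iter k (K2 q s r t) y) (iter k' (K2 q s r t) x).
  rewrite [in X in _ <= _ + 2 * X](@iter_mod p q s r t y k Hq Hs Hqs) -/k' iter_d2 (d2_sym y x).
  have := Hd k' Hk'. move=> *; lra.
exists (fun S => (iter 2 (K2 q s r t) ((0, 0), S)).2).
split; first by move=> UV S _ _; exact: sig2.
have Hsig : forall m S, iter m (fun S => (iter 2 (K2 q s r t) ((0, 0), S)).2) S =
    (iter m.*2 (K2 q s r t) ((0, 0), S)).2 by move=> m S; rewrite sig2m.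
split.
  split; first lia.
  split; first by move=> S; rewrite /inSphere (@iter_sph p q s r t 2 ((0,0), S)).
  split.
    move=> S _; rewrite Hsig (_ : (2 * q).*2 = 4 * q)%N; last by rewrite -mul2n; lia.
    by rewrite period.
  move=> k Hk; exists (S0 p); split; first exact: S0_sph.
  rewrite Hsig => Hf.
  apply: (no_fix (k := k.*2) Hq Hs Hqs Hr Ht M0.2); first by rewrite -mul2n; lia.
  rewrite sig2m in Hf *; rewrite /= in Hf; by rewrite Hf.
move=> k S HS Hf U HU.
have MS : inM a b ((0, 0), S) by split; [exact: O0 | exact: HS].
rewrite Hsig in Hf.
have Hf' : iter k.*2 (K2 q s r t) ((0, 0), S) = ((0, 0), S).
  rewrite sig2m in Hf *; rewrite /= in Hf; by rewrite Hf.
by rewrite Hsig (@K2_free p q s r t a b k.*2 ((0, 0), S) ((0, 0), U) Hq Hs Hqs Hr Ht MS Hf').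
Qed.
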